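(* Let $p$ and $q$ be distinct primes and $n = p^2 q$. Then the non-nilradical graph $\Omega(\mathbb{Z}_n)$ is not very cost effective.
   Context: $\mathbb{Z}_n$ is the ring of residue classes modulo $n$. The non-nilradical graph $\Omega(\mathbb{Z}_n)$ has as vertices the non-nilpotent zero-divisors of $\mathbb{Z}_n$, two distinct vertices being adjacent iff their product is $0$. For a graph $G=(V,E)$ and $S\subseteq V$, a vertex $v\in S$ is very cost effective if $|N(v)\cap S| < |N(v)\cap (V\setminus S)|$; $S$ is very cost effective if every vertex of $S$ is. A bipartition $\{S, V\setminus S\}$ is very cost effective if both parts are very cost effective, and $G$ is very cost effective if it has a very cost effective bipartition. *)

(* Defs.v *)
From mathcomp Require Import all_boot all_order all_algebra.
From mathcomp Require Import boolp.
Set Implicit Arguments. Unset Strict Implicit. Unset Printing Implicit Defensive.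
Import GRing.Theory.
Local Open Scope ring_scope.

Definition is_nilpotent (R : comNzRingType) (x : R) : Prop :=
  exists k : nat, x ^+ k = 0.

Definition is_zero_divisor (R : comNzRingType) (x : R) : Prop :=
  x != 0 /\ exists y : R, y != 0 /\ x * y = 0.

Definition Omega_vertices (R : finComNzRingType) : {set R} :=
  [set x : R | `[< is_zero_divisor x /\ ~ is_nilpotent x >]].

Definition Omega_adj (R : finComNzRingType) (x y : R) : bool :=
  [&& x \in Omega_vertices R, y \in Omega_vertices R, x != y & x * y == 0].

Definition nbhd (T : finType) (V : {set T}) (adj : rel T) (v : T) : {set T} :=
  [set u in V | adj v u].

Definition vce_vertex (T : finType) (V : {set T}) (adj : rel T)
    (S : {set T}) (v : T) : bool :=
  (#|nbhd V adj v :&: S| < #|nbhd V adj v :&: (V :\: S)|)%N.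

Definition vce_set (T : finType) (V : {set T}) (adj : rel T) (S : {set T}) : bool :=
  [forall v in S, vce_vertex V adj S v].

Definition vce_bipartition (T : finType) (V : {set T}) (adj : rel T)
    (S : {set T}) : bool :=
  [&& S \subset V, vce_set V adj S & vce_set V adj (V :\: S)].

Definition very_cost_effective (T : finType) (V : {set T}) (adj : rel T) : Prop :=
  exists S : {set T}, vce_bipartition V adj S.

(* Main.v *)
Require Import Defs.
From mathcomp Require Import all_boot all_order all_algebra.
From mathcomp Require Import boolp zify.
Import GRing.Theory.
Local Open Scope ring_scope.

Lemma Zn_eq0 (n a : nat) : (1 < n)%N -> (((a%:R : 'Z_n) == 0) = (n %| a)%N).
Proof.
move=> hn; rewrite -val_eqE /= val_Zp_nat //.
Qed.

Lemma Zn_val (n : nat) (y : 'Z_n) : y = (val y)%:R.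
Proof. by rewrite natr_Zp. Qed.

Theorem mainTheorem6 (p q : nat) :
  prime p -> prime q -> p != q ->
  ~ very_cost_effective (Omega_vertices 'Z_(p ^ 2 * q))
                        (@Omega_adj 'Z_(p ^ 2 * q)).
Proof.
move=> pp pq npq [S /and3P [sub vS vT]].
have p2 := prime_gt1 pp; have q2 := prime_gt1 pq.
have hn : (1 < p ^ 2 * q)%N by nia.
set x : 'Z_(p ^ 2 * q) := p%:R.
have xV : x \in Omega_vertices 'Z_(p ^ 2 * q).
  rewrite inE; apply/asboolP; split.
    split; first by rewrite Zn_eq0 //; apply/negP => /dvdn_leq; nia.
    exists (p * q)%:R; split.
      by rewrite Zn_eq0 //; apply/negP => /dvdn_leq; nia.
    by apply/eqP; rewrite /x -natrM Zn_eq0 // mulnA mulnn dvdnn.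
  move=> [k]; move/eqP; rewrite /x -natrX Zn_eq0 // => /(dvdn_trans (dvdn_mull _ (dvdnn q))).
  rewrite Euclid_dvdX // dvdn_prime2 // => /andP [/eqP eqp _].
  by move: npq; rewrite eqp eqxx.
have nb : nbhd (Omega_vertices 'Z_(p ^ 2 * q)) (@Omega_adj 'Z_(p ^ 2 * q)) x = set0.
  apply/setP => y; rewrite !inE; apply/negbTE; apply/negP.
  move=> /andP [yV /and4P [_ _ _ /eqP xy0]].
  move: yV; move=> /asboolP [_]; apply.
  exists 2%N.
  move: xy0; have ey : y = (val y)%:R := @Zn_val _ y; move: ey; set m := val y => ey; rewrite ey /x -natrM => /eqP; rewrite Zn_eq0 //.
  move=> h1.
  have hy : (p * q %| m)%N.
    have p0 : (0 < p)%N by nia.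
    by rewrite -(dvdn_pmul2l p0) mulnA mulnn.
  apply/eqP; rewrite -natrX Zn_eq0 //.
  apply: (dvdn_trans _ (dvdn_exp2r 2 hy)).
  rewrite expnMn; apply: dvdn_mul => //; exact: dvdn_exp.
case xS: (x \in S).
  move/forallP: vS => /(_ x); rewrite xS /= /vce_vertex nb !set0I cards0.
  by [].
have xT : x \in Omega_vertices 'Z_(p ^ 2 * q) :\: S by rewrite inE xS xV.
move/forallP: vT => /(_ x); rewrite xT /= /vce_vertex nb !set0I cards0.
by [].
Qed.
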